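(* Assume (A1), (A2) and (A4) of the context, and let the chain $(\bar z_k)_{k\ge0}$ start from an arbitrary initial distribution. For $n\ge1$ let $$\Sigma_n=\frac1n\sum_{k=1}^nG^{-1}\mathsf E\big[(g(\bar z_k)-\bar{\mathrm P}g(\bar z_{k-1}))(g(\bar z_k)-\bar{\mathrm P}g(\bar z_{k-1}))^\top\big]G^{-\top}.$$ Then, with an absolute constant $C$, $$\|\Sigma_n-\Sigma_\infty\|_{\mathrm{ch}}\le C\,\frac{\|G^{-1}\|_\infty^2\,t_{\mathrm{mix}}^3}{n(1-\gamma)^2}.$$
   Context: Finite $\mathcal S,\mathcal A$, $d=|\mathcal S||\mathcal A|$. (A1) deterministic reward $r\in[0,1]$, discount $\gamma\in(0,1)$, kernel $\mathrm P$; $Q^\star$ optimal, $V^\star(s)=\max_aQ^\star(s,a)$. Behavior policy $\pi_b$; $\mu$ stationary law of $(s_t,a_t)$ (with $\min\mu>0$), $D_\mu=\operatorname{diag}(\mu)$; $\bar z_t=(s_t,a_t,s_{t+1})$ is Markov on $\mathsf X=\mathcal S\times\mathcal A\times\mathcal S$ with kernel $\bar{\mathrm P}((s_2,a_2,s_2')\mid(s_1,a_1,s_1'))=\mathbf 1\{s_2=s_1'\}\pi_b(a_2\mid s_2)\mathrm P(s_2'\mid s_2,a_2)$, stationary law $\bar\mu$. (A2) $d_{\mathrm{tv}}(\bar{\mathrm P}^t(\cdot\mid x),\bar\mu)\le(1/4)^{\lfloor t/t_{\mathrm{mix}}\rfloor}$. (A4) unique optimal deterministic policy $\pi^\star$ with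 positive optimality gap. $\mathrm P^{\pi^\star}((s,a),(s',a'))=\mathrm P(s'\mid s,a)\mathbf 1\{a'=\pi^\star(s')\}$, $G=D_\mu(I-\gamma\mathrm P^{\pi^\star})$. Bellman noise $\boldsymbol\varepsilon(s,a,s')=e_{s,a}(r(s,a)+\gamma V^\star(s')-Q^\star(s,a))$; $g=\sum_{k\ge0}\bar{\mathrm P}^k\boldsymbol\varepsilon$ solves $g-\bar{\mathrm P}g=\boldsymbol\varepsilon$. $\Sigma_{\boldsymbol\varepsilon}=\mathsf E_{\bar\mu}[\boldsymbol\varepsilon_0\boldsymbol\varepsilon_0^\top]+\sum_{\ell\ge1}(\mathsf E_{\bar\mu}[\boldsymbol\varepsilon_0\boldsymbol\varepsilon_\ell^\top]+\mathsf E_{\bar\mu}[\boldsymbol\varepsilon_\ell\boldsymbol\varepsilon_0^\top])$ (long-run covariance along the stationary chain, $\boldsymbol\varepsilon_\ell=\boldsymbol\varepsilon(\bar z_\ell)$), $\Sigma_\infty=G^{-1}\Sigma_{\boldsymbol\varepsilon}G^{-\top}$. $\|M\|_{\mathrm{ch}}=\max_{i,j}|M_{ij}|$; $\|G^{-1}\|_\infty$ is the induced $\ell_\infty$ operator norm. *)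

(* Defs.v *)
From HB Require Import structures.
From mathcomp Require Import all_boot all_order all_algebra.
From mathcomp Require Import all_classical all_reals all_analysis.
Set Implicit Arguments. Unset Strict Implicit. Unset Printing Implicit Defensive.
Import Order.TTheory GRing.Theory Num.Theory.
Local Open Scope ring_scope.

Section MDP.
Variables (R : realType) (S A : finType).

Definition SA := (S * A)%type.
Definition dim := #|{: SA}|.
Definition idx (i : 'I_dim) : SA := enum_val i.
Definition X := (S * A * S)%type.

(* maximum of a function over the finite type A (A nonempty in all uses) *)
Definition maxA (f : A -> R) : R :=
  match [pick a : A] with
  | Some a0 => \big[Num.max/f a0]_(a : A) f a
  | None => 0
  end.

Variables (r : S -> A -> R) (gamma : R) (P : S -> A -> S -> R)
          (pib : S -> A -> R) (mu : S -> A -> R) (Q : S -> A -> R)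
          (pistar : S -> A).

Definition Vstar (s : S) : R := maxA (Q s).

(* kernel of zbar_t = (s_t, a_t, s_{t+1}) *)
Definition Pbar (x y : X) : R :=
  let: (s1, a1, s1') := x in let: (s2, a2, s2') := y in
  (s2 == s1')%:R * pib s2 a2 * P s2 a2 s2'.

Fixpoint Pbar_pow (t : nat) (x y : X) : R :=
  match t with
  | 0 => (x == y)%:R
  | t'.+1 => \sum_(z : X) Pbar_pow t' x z * Pbar z y
  end.

Definition mubar (x : X) : R := let: (s, a, s') := x in mu s a * P s a s'.

Definition dtv (p q : X -> R) : R := 2^-1 * \sum_(y : X) `|p y - q y|.

Definition Ppistar (u v : SA) : R := P u.1 u.2 v.1 * (v.2 == pistar v.1)%:R.
Definition Gmx : 'M[R]_dim :=
  \matrix_(i, j) (mu (idx i).1 (idx i).2 *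
                  ((i == j)%:R - gamma * Ppistar (idx i) (idx j))).

Definition eps (x : X) : 'cV[R]_dim :=
  let: (s, a, s') := x in
  \col_i ((idx i == (s, a))%:R * (r s a + gamma * Vstar s' - Q s a)).

Definition Pk_eps (k : nat) (x : X) : 'cV[R]_dim :=
  \sum_(y : X) Pbar_pow k x y *: eps y.

Definition gfun (x : X) : 'cV[R]_dim :=
  \col_i limn (fun N => \sum_(k < N) Pk_eps k x i 0).

Definition Pg (x : X) : 'cV[R]_dim := \sum_(y : X) Pbar x y *: gfun y.

Definition cov0l (l : nat) : 'M[R]_dim :=
  \sum_(x : X) mubar x *: (eps x *m (Pk_eps l x)^T).
Definition covl0 (l : nat) : 'M[R]_dim :=
  \sum_(x : X) mubar x *: (Pk_eps l x *m (eps x)^T).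

Definition Sigma_eps : 'M[R]_dim :=
  \matrix_(i, j) (cov0l 0 i j +
     limn (fun N => \sum_(1 <= l < N) (cov0l l i j + covl0 l i j))).

Definition Ginv : 'M[R]_dim := invmx Gmx.

Definition Sigma_inf : 'M[R]_dim := Ginv *m Sigma_eps *m Ginv^T.

Definition law (nu : X -> R) (k : nat) (y : X) : R :=
  \sum_(x : X) nu x * Pbar_pow k x y.

Definition Mdiff (nu : X -> R) (k : nat) : 'M[R]_dim :=
  \sum_(x : X) \sum_(y : X)
     (law nu k.-1 x * Pbar x y) *: ((gfun y - Pg x) *m (gfun y - Pg x)^T).

Definition Sigma_n (nu : X -> R) (n : nat) : 'M[R]_dim :=
  n%:R^-1 *: \sum_(1 <= k < n.+1) (Ginv *m Mdiff nu k *m Ginv^T).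

End MDP.

Definition chnorm (R : realType) (m n : nat) (M : 'M[R]_(m, n)) : R :=
  \big[Num.max/0]_(i < m) \big[Num.max/0]_(j < n) `|M i j|.

(* induced l_infty operator norm = maximum absolute row sum *)
Definition opnorm_inf (R : realType) (m n : nat) (M : 'M[R]_(m, n)) : R :=
  \big[Num.max/0]_(i < m) \sum_(j < n) `|M i j|.

(* Main.v *)
Require Import Defs.
From HB Require Import structures.
From mathcomp Require Import all_boot all_order all_algebra.
From mathcomp Require Import all_classical all_reals all_analysis.
From mathcomp Require Import ring lra.
Import Order.TTheory GRing.Theory Num.Theory.
Import numFieldNormedType.Exports.
Local Open Scope ring_scope.
Local Open Scope classical_set_scope.

Lemma geom_quarter (R : realFieldType) (M : nat) :
  \sum_(q < M) (4^-1 : R) ^+ q <= 2 - 2 * (4^-1) ^+ M.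
Proof.
elim: M => [|M IH]; first by rewrite big_ord0 expr0 mulr1 subrr.
rewrite big_ord_recr /= exprS.
have h0 : 0 <= (4^-1 : R) ^+ M by rewrite exprn_ge0 // invr_ge0.
apply: (le_trans (lerD IH (lexx _))).
set a := (4^-1 : R) ^+ M. rewrite -/a in h0 *.
have -> : (4^-1 : R) = 1/4 by rewrite div1r.
lra.
Qed.

Lemma sum_floor_quarter (R : realFieldType) (t N : nat) : (0 < t)%N ->
  \sum_(k < N) (4^-1 : R) ^+ (k %/ t) <= 2 * t%:R.
Proof.
move=> t0.
have hge : forall k, 0 <= (4^-1 : R) ^+ k by move=> k; rewrite exprn_ge0 // invr_ge0.
have key : forall M, \sum_(0 <= k < t * M) (4^-1 : R) ^+ (k %/ t)
               = t%:R * \sum_(q < M) (4^-1 : R) ^+ q.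
  elim=> [|M IH]; first by rewrite muln0 big_geq // big_ord0 mulr0.
  rewrite mulnS addnC (big_cat_nat _ (leq_addr _ _)) //= IH big_ord_recr /= mulrDr.
  congr (_ + _).
  rewrite -{1}(add0n (t * M)%N) big_addn addKn big_mkord.
  rewrite (eq_bigr (fun _ => (4^-1 : R) ^+ M)); last first.
    by move=> i _; rewrite addnC mulnC divnMDl // divn_small ?addn0.
  by rewrite sumr_const card_ord mulr_natl.
apply: (le_trans (y := \sum_(0 <= k < t * N) (4^-1 : R) ^+ (k %/ t))).
  rewrite -(big_mkord xpredT (fun k => (4^-1 : R) ^+ (k %/ t))).
  rewrite (big_cat_nat _ (m:=0) (n:=N) (p:=t*N)) //=; last by rewrite leq_pmull.
  by rewrite lerDl sumr_ge0.
rewrite key mulrC ler_wpM2r //.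
apply: le_trans (geom_quarter _ _) _.
by rewrite lerBlDr lerDl mulr_ge0 // hge.
Qed.
Lemma cvg_sum_seq (R : realType) (I : Type) (r : seq I) (f : I -> nat -> R) (a : I -> R) :
  (forall i, f i @ \oo --> a i) ->
  (fun N => \sum_(i <- r) f i N) @ \oo --> \sum_(i <- r) a i.
Proof.
move=> h; elim: r => [|i r IH].
  rewrite big_nil; under eq_fun do rewrite big_nil; exact: cvg_cst.
rewrite big_cons; under eq_fun do rewrite big_cons.
exact: cvgD.
Qed.

Lemma abs_series_cvg (R : realType) (u : nat -> R) (B : R) :
  (forall N, \sum_(k < N) `|u k| <= B) ->
  cvgn (fun N => \sum_(k < N) u k) /\ `|limn (fun N => \sum_(k < N) u k)| <= B.
Proof.
move=> hB.
have e1 : (fun N => \sum_(k < N) u k) = series u.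
  by apply/funext => N; change (\sum_(k < N) u k = \sum_(0 <= k < N) u k); rewrite big_mkord.
have hn : cvgn [normed series u].
  apply: nondecreasing_is_cvgn.
    by apply: nondecreasing_series => n _ _; exact: normr_ge0.
  exists B => _ [N _ <-]; change (\sum_(0 <= k < N) `|u k| <= B); rewrite big_mkord; exact: hB.
have hc : cvgn (fun N => \sum_(k < N) u k) by rewrite e1; exact: normed_cvg.
split => //.
rewrite -lim_norm //.
apply: limr_le; first by apply: is_cvg_norm.
near=> N; apply: le_trans (ler_norm_sum _ _ _) (hB N).
Unshelve. all: by end_near.
Qed.

Lemma cvg_lim_eq (R : realType) (u : nat -> R) (l : R) : u @ \oo --> l -> limn u = l.
Proof. by move=> h; apply: cvg_lim. Qed.
Lemma sum_delta (R : ringType) (T : finType) (t0 : T) (c : T -> R) :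
  \sum_(s : T) (s == t0)%:R * c s = c t0.
Proof.
rewrite (bigD1 t0) //= eqxx mul1r big1 ?addr0 // => s /negbTE ->; exact: mul0r.
Qed.

Lemma sumX (R : ringType) (S A : finType) (F : X S A -> R) :
  \sum_(x : X S A) F x = \sum_(s : S) \sum_(a : A) \sum_(s' : S) F (s, a, s').
Proof.
rewrite pair_bigA /= pair_bigA /=.
by apply: eq_bigr => -[[s a] s'] _.
Qed.

Section MDPproof.
Variables (R : realType) (S A : finType).
Variables (r : S -> A -> R) (gamma : R) (P : S -> A -> S -> R)
    (pib : S -> A -> R) (mu : S -> A -> R) (Q : S -> A -> R)
    (pistar : S -> A) (tmix : nat) (nu : X S A -> R).
Hypothesis Hr : forall s a, 0 <= r s a <= 1.
Hypothesis Hg : 0 < gamma < 1.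
Hypothesis HP0 : forall s a s', 0 <= P s a s'.
Hypothesis HP1 : forall s a, \sum_(s' : S) P s a s' = 1.
Hypothesis Hpib0 : forall s a, 0 <= pib s a.
Hypothesis Hpib1 : forall s, \sum_(a : A) pib s a = 1.
Hypothesis Hmu0 : forall s a, 0 < mu s a.
Hypothesis Hmu1 : \sum_(s : S) \sum_(a : A) mu s a = 1.
Hypothesis Hmust : forall s' a', mu s' a' =
     \sum_(s : S) \sum_(a : A) mu s a * P s a s' * pib s' a'.
Hypothesis HQ : forall s a, Q s a = r s a + gamma * \sum_(s' : S) P s a s' * Vstar Q s'.
Hypothesis Ht : (0 < tmix)%N.
Hypothesis Hmix : forall (x : X S A) (t : nat),
     dtv (Pbar_pow P pib t x) (mubar P mu) <= (4^-1) ^+ (t %/ tmix).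
Hypothesis Hnu0 : forall x, 0 <= nu x.
Hypothesis Hnu1 : \sum_(x : X S A) nu x = 1.

Local Notation Pb := (Pbar P pib).
Local Notation Pp := (Pbar_pow P pib).
Local Notation mb := (mubar P mu).

Lemma Pbar_ge0 x y : 0 <= Pb x y.
Proof.
case: x => [[s1 a1] s1']; case: y => [[s2 a2] s2'] /=.
by rewrite !mulr_ge0.
Qed.

Lemma Pbar_row x : \sum_y Pb x y = 1.
Proof.
case: x => [[s1 a1] s1']; rewrite sumX /=.
rewrite (eq_bigr (fun s => (s == s1')%:R * \sum_(a : A) \sum_(s' : S) pib s a * P s a s')).
  by rewrite sum_delta -(Hpib1 s1'); apply: eq_bigr => a _; rewrite -mulr_sumr HP1 mulr1.
move=> s _; rewrite mulr_sumr; apply: eq_bigr => a _; rewrite mulr_sumr.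
by apply: eq_bigr => s' _; rewrite mulrA.
Qed.

Lemma Pp_ge0 k x y : 0 <= Pp k x y.
Proof.
elim: k x y => [|k IH] x y /=; first by rewrite ler0n.
by apply: sumr_ge0 => z _; rewrite mulr_ge0 // Pbar_ge0.
Qed.

Lemma Pp_row k x : \sum_y Pp k x y = 1.
Proof.
elim: k x => [|k IH] x /=; first by rewrite (bigD1 x) //= eqxx big1 ?addr0 // => y /negbTE; rewrite eq_sym => ->.
rewrite exchange_big /= -(IH x); apply: eq_bigr => z _.
by rewrite -mulr_sumr Pbar_row mulr1.
Qed.

Lemma PpS k x z : Pp k.+1 x z = \sum_w Pp k x w * Pb w z.
Proof. by []. Qed.

Lemma Pp_left k x z : Pp k.+1 x z = \sum_y Pb x y * Pp k y z.
Proof.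
elim: k z => [|k IH] z; rewrite PpS.
  rewrite (bigD1 x) //= eqxx mul1r big1 ?addr0; last first.
    by move=> y /negbTE; rewrite eq_sym => ->; rewrite mul0r.
  rewrite (bigD1 z) //= eqxx mulr1 big1 ?addr0 //.
  by move=> y /negbTE ->; rewrite mulr0.
under eq_bigr do rewrite IH mulr_suml.
rewrite exchange_big; apply: eq_bigr => y _.
by rewrite PpS mulr_sumr; apply: eq_bigr => w _; rewrite mulrA.
Qed.

Lemma mubar_ge0 x : 0 <= mb x.
Proof. by case: x => [[s a] s'] /=; rewrite mulr_ge0 // ltW. Qed.

Lemma mubar_stat y : \sum_x mb x * Pb x y = mb y.
Proof.
case: y => [[s2 a2] s2']; rewrite sumX /= Hmust mulr_suml; apply: eq_bigr => s _.
rewrite mulr_suml; apply: eq_bigr => a _.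
rewrite (eq_bigr (fun s' => (s' == s2)%:R * (mu s a * P s a s' * (pib s2 a2 * P s2 a2 s2')))).
  by rewrite sum_delta !mulrA.
by move=> s' _; rewrite [(s2 == s')]eq_sym; ring.
Qed.

Lemma mubar_sum : \sum_x mb x = 1.
Proof.
rewrite sumX -Hmu1; apply: eq_bigr => s _; apply: eq_bigr => a _.
by rewrite /= -mulr_sumr HP1 mulr1.
Qed.

Local Notation K := ((1 - gamma)^-1).

Lemma K_gt0 : 0 < K.
Proof. by rewrite invr_gt0 subr_gt0; case/andP: Hg. Qed.

Lemma maxA_bound (f : A -> R) M : 0 <= M -> (forall a, `|f a| <= M) -> `|Defs.maxA f| <= M.
Proof.
move=> M0 hf; rewrite /Defs.maxA; case: [pick a : A] => [a0|]; last by rewrite normr0.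
rewrite ler_norml; apply/andP; split.
  apply: le_trans (bigmax_ge_id _ _ _ _).
  by have := hf a0; rewrite ler_norml => /andP[].
apply: bigmax_le; first by have := hf a0; rewrite ler_norml => /andP[].
by move=> a _; have := hf a; rewrite ler_norml => /andP[].
Qed.

Lemma Q_bound s a : `|Q s a| <= K.
Proof.
pose M := \big[Num.max/0]_(p : S * A) `|Q p.1 p.2|.
have M0 : 0 <= M by apply: bigmax_ge_id.
have hQM : forall s a, `|Q s a| <= M.
  by move=> s1 a1; exact: (le_bigmax 0 (fun p : S * A => `|Q p.1 p.2|) (s1, a1)).
have [g0 g1] : 0 < gamma /\ gamma < 1 by case/andP: Hg.
have step : forall s a, `|Q s a| <= 1 + gamma * M.
  move=> s1 a1; rewrite HQ.
  apply: le_trans (ler_normD _ _) _; apply: lerD.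
    by have := Hr s1 a1; case/andP => h0 h1; rewrite ger0_norm.
  rewrite normrM (ger0_norm (ltW g0)) ler_wpM2l ?(ltW g0) //.
  apply: le_trans (ler_norm_sum _ _ _) _.
  apply: (le_trans (y := \sum_(s' : S) P s1 a1 s' * M)).
    apply: ler_sum => s' _; rewrite normrM ger0_norm // ler_wpM2l //.
    exact: maxA_bound.
  by rewrite -mulr_suml HP1 mul1r.
have hM : M <= 1 + gamma * M.
  apply: bigmax_le => [|p _]; last exact: step.
  by rewrite addr_ge0 // mulr_ge0 // ltW.
apply: le_trans (hQM s a) _.
rewrite -[_^-1]mul1r ler_pdivlMr ?subr_gt0 //.
rewrite mulrBr mulr1 mulrC; lra.
Qed.

Lemma V_bound s : `|Vstar Q s| <= K.
Proof. by apply: maxA_bound; [exact: ltW K_gt0 | move=> a; exact: Q_bound]. Qed.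

Lemma eps_bound x i : `|eps r gamma Q x i 0| <= 2 * K.
Proof.
case: x => [[s a] s']; rewrite /eps mxE normrM.
have hc : `|r s a + gamma * Vstar Q s' - Q s a| <= 2 * K.
  have [g0 g1] : 0 < gamma /\ gamma < 1 by case/andP: Hg.
  have hK : (1 - gamma) * K = 1 by rewrite mulfV // subr_eq0 gt_eqF.
  apply: le_trans (ler_normB _ _) _.
  have h1 := Q_bound s a; have h2 := V_bound s'.
  have h3 : `|r s a + gamma * Vstar Q s'| <= 1 + gamma * K.
    apply: le_trans (ler_normD _ _) _; apply: lerD.
      by have := Hr s a; case/andP => h0 h4; rewrite ger0_norm.
    by rewrite normrM (ger0_norm (ltW g0)) ler_wpM2l ?(ltW g0).
  nra.
have hn : 0 <= `|((idx i == (s, a))%:R : R)| <= 1.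
  by case: (idx i == (s, a)); rewrite ?normr0 ?normr1 ?lexx ?ler01.
case/andP: hn => hn0 hn1.
rewrite -[X in _ <= X]mul1r; apply: ler_pM => //.
Qed.

Local Notation ep := (eps r gamma Q).
Local Notation Pke := (Pk_eps r gamma P pib Q).
Local Notation gf := (gfun r gamma P pib Q).
Local Notation Pgf := (Pg r gamma P pib Q).

Lemma eps_mean i : \sum_x mb x * ep x i 0 = 0.
Proof.
rewrite sumX big1 // => s _; rewrite big1 // => a _.
rewrite (eq_bigr (fun s' => (mu s a * (idx i == (s, a))%:R) *
     (P s a s' * (r s a + gamma * Vstar Q s' - Q s a)))); last first.
  by move=> s' _; rewrite /= mxE; ring.
rewrite -mulr_sumr.
have -> : \sum_(s' : S) P s a s' * (r s a + gamma * Vstar Q s' - Q s a) = 0.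
  rewrite (eq_bigr (fun s' => P s a s' * (r s a - Q s a) + gamma * (P s a s' * Vstar Q s'))); last first.
    by move=> s' _; ring.
  rewrite big_split /= -mulr_suml -mulr_sumr HP1 mul1r HQ; ring.
by rewrite mulr0.
Qed.

Lemma Pk_entry k x i : Pke k x i 0 = \sum_y Pp k x y * ep y i 0.
Proof. by rewrite /Pk_eps summxE; apply: eq_bigr => y _; rewrite mxE. Qed.

Lemma Pk0 x i : Pke 0 x i 0 = ep x i 0.
Proof.
rewrite Pk_entry (bigD1 x) //= eqxx mul1r big1 ?addr0 //.
by move=> y /negbTE; rewrite eq_sym => ->; rewrite mul0r.
Qed.

Lemma dtv_sum (p q : X S A -> R) : \sum_y `|p y - q y| = 2 * dtv p q.
Proof. by rewrite /dtv mulrA mulfV ?mul1r // pnatr_eq0. Qed.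

Lemma Pk_bound k x i : `|Pke k x i 0| <= 4 * K * (4^-1) ^+ (k %/ tmix).
Proof.
rewrite Pk_entry.
have -> : \sum_y Pp k x y * ep y i 0 = \sum_y (Pp k x y - mb y) * ep y i 0.
  under [RHS]eq_bigr do rewrite mulrBl.
  by rewrite sumrB eps_mean subr0.
apply: le_trans (ler_norm_sum _ _ _) _.
apply: (le_trans (y := \sum_y `|Pp k x y - mb y| * (2 * K))).
  by apply: ler_sum => y _; rewrite normrM ler_wpM2l // eps_bound.
rewrite -mulr_suml dtv_sum.
have := Hmix x k; have := K_gt0.
set d := dtv _ _; set a := _ ^+ _ => hK hd.
have -> : 4 * K * a = (2 * a) * (2 * K) by ring.
by rewrite ler_wpM2r ?ler_wpM2l // mulr_ge0 // ltW.
Qed.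

Lemma quarter_ge0 k : 0 <= (4^-1 : R) ^+ k.
Proof. by rewrite exprn_ge0 // invr_ge0. Qed.

Lemma g_cvg x i : cvgn (fun N => \sum_(k < N) Pke k x i 0) /\
   `|gf x i 0| <= 8 * K * tmix%:R.
Proof.
have := @abs_series_cvg R (fun k => Pke k x i 0) (8 * K * tmix%:R).
rewrite /gfun mxE; apply.
move=> N; apply: (le_trans (y := \sum_(k < N) 4 * K * (4^-1) ^+ (k %/ tmix))).
  by apply: ler_sum => k _; exact: Pk_bound.
rewrite -mulr_sumr.
have := @sum_floor_quarter R tmix N Ht; have := K_gt0 => hK h.
have -> : 8 * K * tmix%:R = (4 * K) * (2 * tmix%:R) by ring.
by rewrite ler_wpM2l // mulr_ge0 // ltW.
Qed.

Lemma g_to x i : (fun N => \sum_(k < N) Pke k x i 0) @ \oo --> gf x i 0.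
Proof. by rewrite /gfun mxE; case: (g_cvg x i). Qed.

Lemma g_bound x i : `|gf x i 0| <= 8 * K * tmix%:R.
Proof. by case: (g_cvg x i). Qed.

Lemma Pg_entry x i : Pgf x i 0 = \sum_y Pb x y * gf y i 0.
Proof. by rewrite /Pg summxE; apply: eq_bigr => y _; rewrite mxE. Qed.

Lemma poisson x i : gf x i 0 = ep x i 0 + Pgf x i 0.
Proof.
pose s y N := \sum_(k < N) Pke k y i 0.
have h1 : (fun N => \sum_y Pb x y * s y N) @ \oo --> Pgf x i 0.
  rewrite Pg_entry; apply: cvg_sum_seq => y.
  by apply: cvgMl_tmp; exact: g_to.
have e : forall N, \sum_y Pb x y * s y N = s x N.+1 - ep x i 0.
  move=> N; rewrite /s big_ord_recl /= Pk0 [ep x i 0 + _]addrC addrK.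
  under eq_bigr do rewrite mulr_sumr.
  rewrite exchange_big /=; apply: eq_bigr => k _.
  rewrite Pk_entry; under [RHS]eq_bigr do rewrite Pp_left mulr_suml.
  rewrite exchange_big /=; apply: eq_bigr => y _.
  by rewrite Pk_entry mulr_sumr; apply: eq_bigr => z _; rewrite mulrA.
have h2 : (fun N => \sum_y Pb x y * s y N) @ \oo --> gf x i 0 - ep x i 0.
  under eq_fun do rewrite e.
  apply: cvgB; last exact: cvg_cst.
  by rewrite (cvg_shiftS (fun N => s x N)); exact: g_to.
have E1 := @cvg_lim_eq _ _ _ h1; have E2 := @cvg_lim_eq _ _ _ h2.
rewrite E1 in E2; rewrite E2; ring.
Qed.

Lemma mul_colrow (u v : 'cV[R]_(Defs.dim S A)) i j : (u *m v^T) i j = u i 0 * v j 0.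
Proof. by rewrite mxE big_ord1 mxE. Qed.

Lemma cov0l_entry l i j :
  cov0l r gamma P pib mu Q l i j = \sum_x mb x * (ep x i 0 * Pke l x j 0).
Proof. by rewrite /cov0l summxE; apply: eq_bigr => x _; rewrite mxE mul_colrow. Qed.

Lemma covl0_entry l i j :
  covl0 r gamma P pib mu Q l i j = \sum_x mb x * (Pke l x i 0 * ep x j 0).
Proof. by rewrite /covl0 summxE; apply: eq_bigr => x _; rewrite mxE mul_colrow. Qed.

Lemma stat_sum (h : X S A -> R) : \sum_x mb x * \sum_y Pb x y * h y = \sum_y mb y * h y.
Proof.
under eq_bigr do rewrite mulr_sumr.
rewrite exchange_big /=; apply: eq_bigr => y _.
by rewrite -mubar_stat mulr_suml; apply: eq_bigr => x _; rewrite mulrA.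
Qed.

Lemma Sigma_eps_entry i j :
  Sigma_eps r gamma P pib mu Q i j =
  \sum_x mb x * (gf x i 0 * gf x j 0 - Pgf x i 0 * Pgf x j 0).
Proof.
rewrite /Sigma_eps mxE.
pose f l := cov0l r gamma P pib mu Q l i j + covl0 r gamma P pib mu Q l i j.
pose L := \sum_x mb x * (ep x i 0 * gf x j 0 + gf x i 0 * ep x j 0).
pose T N := \sum_(0 <= l < N) f l.
have hT : T @ \oo --> L.
  have eT : T = (fun N => \sum_x mb x * (ep x i 0 * \sum_(k < N) Pke k x j 0
                                   + (\sum_(k < N) Pke k x i 0) * ep x j 0)).
    apply/funext => N; rewrite /T /f big_mkord.
    rewrite (eq_bigr (fun l : 'I_N => \sum_x mb x * (ep x i 0 * Pke l x j 0 + Pke l x i 0 * ep x j 0))); last first.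
      by move=> l _; rewrite cov0l_entry covl0_entry -big_split; apply: eq_bigr => x _; rewrite mulrDr.
    rewrite exchange_big /=; apply: eq_bigr => x _.
    rewrite mulr_sumr mulr_suml -big_split mulr_sumr.
    by apply: eq_bigr => k _.
  rewrite eT; apply: cvg_sum_seq => x; apply: cvgMl_tmp.
  apply: cvgD; first by apply: cvgMl_tmp; exact: g_to.
  by apply: cvgMr_tmp; exact: g_to.
have hu : (fun N => \sum_(1 <= l < N) f l) @ \oo --> L - f 0%N.
  rewrite -(cvg_shiftS (fun N => \sum_(1 <= l < N) f l)).
  have -> : (fun N => \sum_(1 <= l < N.+1) f l) = (fun N => T N.+1 - f 0%N).
    apply/funext => N; rewrite /T big_add1 big_nat_recl //=.
    by rewrite [f 0%N + _]addrC addrK.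
  apply: cvgB; last exact: cvg_cst.
  by rewrite (cvg_shiftS T).
have H : forall a b d : R, a + (d - (a + b)) = d - b by move=> a b d; ring.
rewrite (@cvg_lim_eq _ _ _ hu) /f /L covl0_entry H -sumrB; apply: eq_bigr => x _.
rewrite !poisson Pk0; ring.
Qed.

Definition Fx x i j := \sum_y Pb x y * ((gf y i 0 - Pgf x i 0) * (gf y j 0 - Pgf x j 0)).

Lemma EF i j : \sum_x mb x * Fx x i j = Sigma_eps r gamma P pib mu Q i j.
Proof.
rewrite Sigma_eps_entry.
have e : forall x, Fx x i j = \sum_y Pb x y * (gf y i 0 * gf y j 0) - Pgf x i 0 * Pgf x j 0.
  move=> x; rewrite /Fx.
  have e1 : forall y, Pb x y * ((gf y i 0 - Pgf x i 0) * (gf y j 0 - Pgf x j 0)) =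
     Pb x y * (gf y i 0 * gf y j 0) - Pgf x i 0 * (Pb x y * gf y j 0)
     - Pgf x j 0 * (Pb x y * gf y i 0) + Pgf x i 0 * Pgf x j 0 * Pb x y.
    by move=> y; ring.
  under eq_bigr do rewrite e1.
  rewrite !big_split /= !sumrN -!mulr_sumr -!Pg_entry Pbar_row; ring.
rewrite (eq_bigr (fun x => mb x * (\sum_y Pb x y * (gf y i 0 * gf y j 0)) - mb x * (Pgf x i 0 * Pgf x j 0))); last by move=> x _; rewrite e mulrBr.
by rewrite sumrB stat_sum -sumrB; apply: eq_bigr => x _; rewrite mulrBr.
Qed.

Lemma submx_entry (u v : 'M[R]_(Defs.dim S A)) i j : (u - v) i j = u i j - v i j.
Proof. by rewrite !mxE. Qed.

Lemma subcv (u v : 'cV[R]_(Defs.dim S A)) i : (u - v) i 0 = u i 0 - v i 0.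
Proof. by rewrite !mxE. Qed.

Lemma Mdiff_entry k i j :
  Mdiff r gamma P pib Q nu k i j = \sum_x law P pib nu k.-1 x * Fx x i j.
Proof.
rewrite /Mdiff summxE; apply: eq_bigr => x _; rewrite [LHS]summxE /Fx mulr_sumr.
by apply: eq_bigr => y _; rewrite mxE mul_colrow !subcv -mulrA.
Qed.

Lemma Pg_bound x i : `|Pgf x i 0| <= 8 * K * tmix%:R.
Proof.
rewrite Pg_entry; apply: le_trans (ler_norm_sum _ _ _) _.
apply: (le_trans (y := \sum_y Pb x y * (8 * K * tmix%:R))).
  by apply: ler_sum => y _; rewrite normrM ger0_norm ?Pbar_ge0 // ler_wpM2l ?Pbar_ge0 // g_bound.
by rewrite -mulr_suml Pbar_row mul1r.
Qed.

Lemma Fx_bound x i j : `|Fx x i j| <= 256 * K ^+ 2 * tmix%:R ^+ 2.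
Proof.
rewrite /Fx; apply: le_trans (ler_norm_sum _ _ _) _.
have hB : forall y i, `|gf y i 0 - Pgf x i 0| <= 16 * K * tmix%:R.
  move=> y i0; apply: le_trans (ler_normB _ _) _.
  have := g_bound y i0; have := Pg_bound x i0; lra.
apply: (le_trans (y := \sum_y Pb x y * (256 * K ^+ 2 * tmix%:R ^+ 2))).
  apply: ler_sum => y _; rewrite normrM ger0_norm ?Pbar_ge0 // ler_wpM2l ?Pbar_ge0 //.
  rewrite normrM.
  have -> : 256 * K ^+ 2 * tmix%:R ^+ 2 = (16 * K * tmix%:R) * (16 * K * tmix%:R) by ring.
  by apply: ler_pM => //; apply: hB.
by rewrite -mulr_suml Pbar_row mul1r.
Qed.

Lemma law_dev t : \sum_y `|law P pib nu t y - mb y| <= 2 * (4^-1) ^+ (t %/ tmix).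
Proof.
have e : forall y, law P pib nu t y - mb y = \sum_x nu x * (Pp t x y - mb y).
  move=> y; rewrite (eq_bigr (fun x => nu x * Pp t x y - nu x * mb y)); last first.
    by move=> x _; rewrite mulrBr.
  by rewrite sumrB -mulr_suml Hnu1 mul1r.
apply: (le_trans (y := \sum_y \sum_x nu x * `|Pp t x y - mb y|)).
  apply: ler_sum => y _; rewrite e; apply: le_trans (ler_norm_sum _ _ _) _.
  by apply: ler_sum => x _; rewrite normrM ger0_norm.
rewrite exchange_big /=.
apply: (le_trans (y := \sum_x nu x * (2 * (4^-1) ^+ (t %/ tmix)))).
  apply: ler_sum => x _; rewrite -mulr_sumr ler_wpM2l // dtv_sum.
  by rewrite ler_wpM2l.
by rewrite -mulr_suml Hnu1 mul1r.
Qed.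

Lemma Mdiff_dev k i j :
  `|Mdiff r gamma P pib Q nu k i j - Sigma_eps r gamma P pib mu Q i j|
    <= 2 * (4^-1) ^+ (k.-1 %/ tmix) * (256 * K ^+ 2 * tmix%:R ^+ 2).
Proof.
rewrite Mdiff_entry -EF -sumrB.
under eq_bigr do rewrite -mulrBl.
apply: le_trans (ler_norm_sum _ _ _) _.
apply: (le_trans (y := \sum_x `|law P pib nu k.-1 x - mb x| * (256 * K ^+ 2 * tmix%:R ^+ 2))).
  by apply: ler_sum => x _; rewrite normrM ler_wpM2l // Fx_bound.
rewrite -mulr_suml ler_wpM2r ?law_dev //.
have := K_gt0 => hK; by rewrite !mulr_ge0 ?exprn_ge0 // ltW.
Qed.

Local Notation G := (Ginv gamma P mu pistar).
Local Notation Se := (Sigma_eps r gamma P pib mu Q).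
Local Notation Md := (Mdiff r gamma P pib Q nu).

Lemma decomp (n : nat) : (0 < n)%N ->
  Sigma_n r gamma P pib mu Q pistar nu n - Sigma_inf r gamma P pib mu Q pistar =
  G *m (n%:R^-1 *: \sum_(1 <= k < n.+1) (Md k - Se)) *m G^T.
Proof.
move=> n0.
rewrite /Sigma_n /Sigma_inf sumrB sumr_const_nat subn1 /=.
rewrite scalerBr -(scaler_nat n Se) scalerA mulVf ?pnatr_eq0 -?lt0n // scale1r.
rewrite mulmxBr mulmxBl -scalemxAr -scalemxAl mulmx_sumr mulmx_suml.
by congr (_ *: _ - _); apply: eq_bigr => k _; rewrite mulmxA.
Qed.

Lemma entry_bound (Dm : 'M[R]_(Defs.dim S A)) (Bd : R) i j :
  (forall a b, `|Dm a b| <= Bd) ->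
  `|(G *m Dm *m G^T) i j| <= Bd * opnorm_inf G ^+ 2.
Proof.
move=> hD.
have Bd0 : 0 <= Bd.
  case: (Defs.dim S A) Dm hD i j => [|d] Dm0 hD0 i0 j0; first by case: i0.
  exact: le_trans (normr_ge0 _) (hD0 ord0 ord0).
have row : forall i0, \sum_a `|G i0 a| <= opnorm_inf G.
  by move=> i0; exact: (le_bigmax 0 (fun i1 => \sum_a `|G i1 a|) i0).
rewrite mxE; apply: le_trans (ler_norm_sum _ _ _) _.
apply: (le_trans (y := \sum_b (\sum_a `|G i a| * Bd) * `|G j b|)).
  apply: ler_sum => b _; rewrite !mxE normrM ler_wpM2r //.
  apply: le_trans (ler_norm_sum _ _ _) _.
  by apply: ler_sum => a _; rewrite normrM ler_wpM2l.
rewrite -mulr_sumr -mulr_suml.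
have h1 := row i; have h2 := row j.
have s0 : forall i0, 0 <= \sum_a `|G i0 a| by move=> i0; apply: sumr_ge0 => a _.
have -> : Bd * opnorm_inf G ^+ 2 = (opnorm_inf G * Bd) * opnorm_inf G by ring.
apply: ler_pM => //; first by rewrite mulr_ge0.
  by rewrite ler_wpM2r.
Qed.

Lemma scale_sum_entry (c : R) (F : nat -> 'M[R]_(Defs.dim S A)) m n a b :
  (c *: \sum_(m <= k < n) F k) a b = c * \sum_(m <= k < n) F k a b.
Proof. by rewrite mxE summxE. Qed.

Lemma D_bound (n : nat) a b : (0 < n)%N ->
  `|(n%:R^-1 *: \sum_(1 <= k < n.+1) (Md k - Se)) a b|
     <= n%:R^-1 * (1024 * K ^+ 2 * tmix%:R ^+ 3).
Proof.
move=> n0.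
rewrite scale_sum_entry normrM ger0_norm ?invr_ge0 // ler_wpM2l ?invr_ge0 //.
apply: le_trans (ler_norm_sum _ _ _) _.
apply: (le_trans (y := \sum_(1 <= k < n.+1) 2 * (4^-1) ^+ (k.-1 %/ tmix) * (256 * K ^+ 2 * tmix%:R ^+ 2))).
  by apply: ler_sum => k _; rewrite submx_entry; exact: Mdiff_dev.
rewrite -mulr_suml big_add1 /= big_mkord -mulr_sumr.
have := @sum_floor_quarter R tmix n Ht; have := K_gt0 => hK h.
have -> : 1024 * K ^+ 2 * tmix%:R ^+ 3 = 2 * (2 * tmix%:R) * (256 * K ^+ 2 * tmix%:R ^+ 2) by ring.
rewrite ler_wpM2r ?ler_wpM2l //.
by rewrite !mulr_ge0 ?exprn_ge0 // ltW.
Qed.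


Lemma final (n : nat) : (0 < n)%N ->
  chnorm (Sigma_n r gamma P pib mu Q pistar nu n - Sigma_inf r gamma P pib mu Q pistar)
  <= (1024%N)%:R * (opnorm_inf G) ^+ 2 * (tmix%:R) ^+ 3 / (n%:R * (1 - gamma) ^+ 2).
Proof.
move=> n0.
have -> : (1024%N)%:R * (opnorm_inf G) ^+ 2 * (tmix%:R) ^+ 3 / (n%:R * (1 - gamma) ^+ 2)
   = n%:R^-1 * (1024 * K ^+ 2 * tmix%:R ^+ 3) * opnorm_inf G ^+ 2.
  have [g0 g1] : 0 < gamma /\ gamma < 1 by case/andP: Hg.
  have hg : 1 - gamma != 0 by rewrite subr_eq0 gt_eqF.
  have hn : n%:R != 0 :> R by rewrite pnatr_eq0 -lt0n.
  rewrite exprVn; field.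
  by rewrite hn hg.
have B0 : 0 <= n%:R^-1 * (1024 * K ^+ 2 * tmix%:R ^+ 3) * opnorm_inf G ^+ 2.
  apply: mulr_ge0; last exact: sqr_ge0.
  apply: mulr_ge0; first by rewrite invr_ge0 ler0n.
  apply: mulr_ge0; last by rewrite exprn_ge0 // ler0n.
  apply: mulr_ge0; last exact: sqr_ge0.
  lra.
rewrite decomp //; apply: bigmax_le; first exact: B0.
move=> i _; apply: bigmax_le; first exact: B0.
move=> j _; apply: entry_bound => a b; exact: D_bound.
Qed.

End MDPproof.

Theorem lemmaB6 :
  exists C : nat,
  forall (R : realType) (S A : finType)
    (r : S -> A -> R) (gamma : R) (P : S -> A -> S -> R)
    (pib : S -> A -> R) (mu : S -> A -> R) (Q : S -> A -> R)
    (pistar : S -> A) (tmix : nat) (nu : X S A -> R) (n : nat),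
  (* (A1): deterministic reward in [0,1], discount in (0,1), transition kernel *)
  (forall s a, 0 <= r s a <= 1) ->
  0 < gamma < 1 ->
  (forall s a s', 0 <= P s a s') ->
  (forall s a, \sum_(s' : S) P s a s' = 1) ->
  (* behavior policy *)
  (forall s a, 0 <= pib s a) ->
  (forall s, \sum_(a : A) pib s a = 1) ->
  (* mu: stationary law of (s_t, a_t), with min mu > 0 *)
  (forall s a, 0 < mu s a) ->
  \sum_(s : S) \sum_(a : A) mu s a = 1 ->
  (forall s' a', mu s' a' =
     \sum_(s : S) \sum_(a : A) mu s a * P s a s' * pib s' a') ->
  (* Q = Q*: the optimal Q-function (Bellman optimality equation) *)
  (forall s a, Q s a = r s a + gamma * \sum_(s' : S) P s a s' * Vstar Q s') ->
  (* (A4): unique optimal deterministic policy pistar, positive gap *)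
  (forall s a, a != pistar s -> Q s a < Q s (pistar s)) ->
  (* (A2): mixing of the chain zbar *)
  (0 < tmix)%N ->
  (forall (x : X S A) (t : nat),
     dtv (Pbar_pow P pib t x) (mubar P mu) <= (4^-1) ^+ (t %/ tmix)) ->
  (* arbitrary initial distribution of zbar_0 *)
  (forall x, 0 <= nu x) -> \sum_(x : X S A) nu x = 1 ->
  (0 < n)%N ->
  chnorm (Sigma_n r gamma P pib mu Q pistar nu n
          - Sigma_inf r gamma P pib mu Q pistar)
  <= C%:R * (opnorm_inf (Ginv gamma P mu pistar)) ^+ 2 * (tmix%:R) ^+ 3
       / (n%:R * (1 - gamma) ^+ 2).
Proof.
exists 1024%N.
move=> R S A r gamma P pib mu Q pistar tmix nu n Hr Hg HP0 HP1 Hpib0 Hpib1 Hmu0 Hmu1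
  Hmust HQ HA4 Ht Hmix Hnu0 Hnu1 hn.
by apply: final; assumption.
Qed.
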